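(* Let $d\geq 1$ and $m\geq 2$ be integers, and let $M$ be a non-empty finite set of $m$-gons in $\mathbb{R}^d$. Let $\mathcal{H}(M)$ be the hypergraph with vertex set $\mathbb{R}^d$ and edge set $\{X\subseteq \mathbb{R}^d \mid X \text{ is congruent in } \mathbb{R}^d \text{ to some } T\in M\}$. Then there exists a finite set $S$ of $(m+1)$-gons in $\mathbb{R}^d$ such that $\mathcal{H}(M)$ is equivalent to the $(m+1)$-uniform hypergraph $\mathcal{H}(S)$ with vertex set $\mathbb{R}^d$ and edge set $\{Y\subseteq\mathbb{R}^d \mid Y \text{ is congruent in } \mathbb{R}^d \text{ to some element of } S\}$.
   Context: $\mathbb{R}^d$ carries the Euclidean norm; two subsets are congruent if one is the image of the other under an isometry of Euclidean $\mathbb{R}^d$. An $m$-gon is simply an arbitrary subset of $\mathbb{R}^d$ of cardinality exactly $m$ (collinear points allowed). A hypergraph is a pair $(V,E)$ with $V$ non-empty and $E$ a set of subsets of $V$, each of cardinality at least $2$. A proper coloring is a map $\varphi:V\to C$ such that no edge $e\in E$ has $\varphi|_e$ constant; the chromatic number $\chi$ is the least $|C|$ for which a proper coloring exists. Two hypergraphs $\mathcal{H},\mathcal{G}$ on the same vertex set $S$ are equivalent if $\chi(\mathcal{H})=\chi(\mathcal{G})$ and, for every set $C$ with $|C|=\chi(\mathcal{H})=\chi(\mathcal{G})$, a map $\varphi:S\to C$ is a proper coloring of $\mathcal{H}$ if and only if it is a proper coloring of $\mathcal{G}$. *)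

(* Defs.v *)
From HB Require Import structures.
From mathcomp Require Import all_boot all_order all_algebra.
From mathcomp Require Import Rstruct.
From Stdlib Require List.
Set Implicit Arguments. Unset Strict Implicit. Unset Printing Implicit Defensive.
Import Order.TTheory GRing.Theory Num.Theory.
Local Open Scope ring_scope.

Definition pt (d : nat) := 'rV[Rdefinitions.R]_d.

Definition edist (d : nat) (x y : pt d) : Rdefinitions.R :=
  Num.sqrt (\sum_(i < d) (x ord0 i - y ord0 i) ^+ 2).

Definition pset (d : nat) := pt d -> Prop.

Definition isometry (d : nat) (f : pt d -> pt d) : Prop :=
  forall x y, edist (f x) (f y) = edist x y.

Definition congruent (d : nat) (A B : pset d) : Prop :=
  exists f : pt d -> pt d, isometry f /\
    (forall y, B y <-> exists x, A x /\ f x = y).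

(* An m-gon: a subset of R^d of cardinality exactly m. *)
Definition is_gon (d m : nat) (A : pset d) : Prop :=
  exists s : seq (pt d), uniq s /\ size s = m /\ (forall x, A x <-> x \in s).

Definition hypergraph (V : Type) := (V -> Prop) -> Prop.

Definition proper_coloring (V C : Type) (E : hypergraph V) (phi : V -> C) : Prop :=
  forall e, E e -> ~ (forall x y, e x -> e y -> phi x = phi y).

Definition colorable (V : Type) (E : hypergraph V) (k : nat) : Prop :=
  exists phi : V -> 'I_k, proper_coloring E phi.

Definition chromatic_number_is (V : Type) (E : hypergraph V) (k : nat) : Prop :=
  colorable E k /\ (forall k', (k' < k)%N -> ~ colorable E k').

Definition equivalent_hg (V : Type) (H G : hypergraph V) : Prop :=
  exists k : nat, chromatic_number_is H k /\ chromatic_number_is G k /\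
    (forall (C : finType), #|C| = k ->
       forall phi : V -> C, proper_coloring H phi <-> proper_coloring G phi).

Definition HM (d : nat) (M : seq (pset d)) : hypergraph (pt d) :=
  fun X => exists T, List.In T M /\ congruent T X.

(* Main.v *)
Require Import Defs.
From mathcomp Require Import all_boot all_order all_algebra.
From mathcomp Require Import Rstruct.
From Stdlib Require List.
From mathcomp Require Import ring lra zify.
From mathcomp Require Import boolp.
From mathcomp Require classical_sets.
Require Import Defs.
Set Implicit Arguments. Unset Strict Implicit. Unset Printing Implicit Defensive.
Import Order.TTheory GRing.Theory Num.Theory.

Definition mono (V C : Type) (phi : V -> C) (e : V -> Prop) :=
  forall x y, e x -> e y -> phi x = phi y.
Definition inside (V : eqType) (e : V -> Prop) (Q : seq V) := forall x, e x -> x \in Q.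
Definition good (V : eqType) C (E : hypergraph V) (Q : seq V) (phi : V -> C) :=
  forall e, E e -> inside e Q -> ~ mono phi e.

Module CompactM.
Import classical_sets.
Local Open Scope classical_set_scope.

Lemma compactness (V : eqType) (E : hypergraph V) (j : nat) :
  (forall e, E e -> exists s : seq V, forall x, e x <-> x \in s) ->
  (forall Q : seq V, exists phi : V -> 'I_j, good E Q phi) ->
  colorable E j.
Proof.
move=> Efin H0.
pose agree (A : set (V * 'I_j)) (Q : seq V) (phi : V -> 'I_j) :=
  forall x c, x \in Q -> A (x, c) -> phi x = c.
pose P := fun A : set (V * 'I_j) => forall Q : seq V, exists phi, agree A Q phi /\ good E Q phi.
have P0 : P set0.
  move=> Q; have [phi hphi] := H0 Q; exists phi; split => // x c _ [].
have [A [PA maxA]] : exists A, P A /\ forall B, A `<` B -> ~ P B.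
  apply: Zorn_bigcup => F FP Ftot Q.
  have key : forall ps : seq (V * 'I_j), exists A, P A /\ (A = set0 \/ F A) /\
       forall p, p \in ps -> (\bigcup_(X in F) X) p -> A p.
    elim=> [|p ps [A [PA [A0F Aps]]]].
      by exists set0; split => //; split; [left|].
    have [[X FX Xp]|np] := pselect ((\bigcup_(X in F) X) p); last first.
      exists A; split => //; split => // q; rewrite inE => /orP[/eqP -> //|]; exact: Aps.
    case: A0F => [A0|FA].
      exists X; split; first exact: FP.
      split; first by right.
      move=> q; rewrite inE => /orP[/eqP -> //|qps Uq].
      by have := Aps q qps Uq; rewrite A0.
    have [AX|XA] := Ftot _ _ FA FX.
      exists X; split; first exact: FP.
      split; first by right.
      move=> q; rewrite inE => /orP[/eqP -> //|qps Uq].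
      by apply: AX; exact: Aps.
    exists A; split => //; split; first by right.
    move=> q; rewrite inE => /orP[/eqP -> _|qps Uq]; first exact: XA.
    exact: Aps.
  have [A [PA [_ HA]]] := key [seq (x, c) | x <- Q, c <- enum 'I_j].
  have [phi [ag gd]] := PA Q; exists phi; split => // x c xQ Uxc.
  apply: ag => //; apply: HA => //.
  by apply/allpairsP; exists (x, c); rewrite /= mem_enum.
have tot : forall x, exists c, A (x, c).
  move=> x; apply: contrapT => nx.
  have hc : forall c : 'I_j, exists Q : seq V, forall phi, agree (A `|` [set (x, c)]) Q phi -> ~ good E Q phi.
    move=> c; apply: contrapT => nQ.
    apply: (maxA (A `|` [set (x, c)])).
      split; first by move=> t At; left.
      move=> /(_ (x, c)) h; apply: nx; exists c; apply: h; by right.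
    move=> Q; apply: contrapT => nn; apply: nQ; exists Q => phi ag gd.
    by apply: nn; exists phi.
  pose Qc c := proj1_sig (cid (hc c)).
  have Qcs c : forall phi, agree (A `|` [set (x, c)]) (Qc c) phi -> ~ good E (Qc c) phi.
    exact: (proj2_sig (cid (hc c))).
  pose Q := x :: flatten [seq Qc c | c <- enum 'I_j].
  have subQ c y : y \in Qc c -> y \in Q.
    move=> yQ; rewrite inE; apply/orP; right; apply/flatten_mapP.
    by exists c; rewrite ?mem_enum.
  have [phi [ag gd]] := PA Q.
  apply: (Qcs (phi x) phi).
    move=> y c yQ [Ayc|[-> ->]] //; apply: ag => //; exact: subQ yQ.
  move=> e Ee ie; apply: gd => // z ez; apply: subQ (ie z ez).
pose col x := proj1_sig (cid (tot x)).
have colP x : A (x, col x) := proj2_sig (cid (tot x)).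
exists col => e Ee me.
have [s hs] := Efin e Ee.
have [phi [ag gd]] := PA s.
apply: (gd e Ee); first by move=> z /hs.
move=> x y ex ey.
rewrite (ag x (col x)) ?(ag y (col y)) //; first exact: me.
  exact/hs.
exact/hs.
Qed.
End CompactM.
Import CompactM.

Local Open Scope ring_scope.

Lemma int_mod_far (a b : int) (N : nat) : (a %% N.+1)%Z = (b %% N.+1)%Z -> a != b ->
  (N.+1%:Z <= a - b) \/ (N.+1%:Z <= b - a).
Proof.
move=> hm hab.
have ea := divz_eq a N.+1; have eb := divz_eq b N.+1.
move: ea eb; set qa := (a %/ N.+1)%Z; set qb := (b %/ N.+1)%Z; set r := (b %% N.+1)%Z.
rewrite hm -/r => ea eb.
have e : a - b = (qa - qb) * N.+1%:Z by rewrite ea eb; ring.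
rewrite e; move: hab; rewrite ea eb => hab.
have [z0|[zp|zn]] : (qa - qb = 0) \/ (1 <= qa - qb) \/ (qa - qb <= -1) by lia.
- have hq : qa = qb by lia.
  by rewrite hq eqxx in hab.
- left; nia.
- right; nia.
Qed.

Lemma test (u v a s x y : Rdefinitions.R) : 0 < s -> a <= u < a + 1 -> a <= v < a + 1 -> (u * s - v * s) ^+ 2 <= s ^+ 2.
Proof. move=> hs /andP[h1 h2] /andP[h3 h4].
have h : (u - v) ^+ 2 <= 1 by nra.
have -> : (u * s - v * s) ^+ 2 = s ^+ 2 * (u - v) ^+ 2 by ring.
nra. Qed.

Lemma sq_le_sum (d : nat) (F : 'I_d -> Rdefinitions.R) i : (forall j, 0 <= F j) -> F i <= \sum_(j < d) F j.
Proof.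
move=> h; rewrite (bigD1 i) //= lerDl; apply: sumr_ge0 => j _; exact: h.
Qed.

Lemma grid (d : nat) (hd : (0 < d)%N) (lo hi : Rdefinitions.R) : 0 < lo -> 0 <= hi ->
  exists K (phi : pt d -> 'I_K), forall x y, phi x = phi y -> edist x y < lo \/ hi < edist x y.
Proof.
move=> hlo hhi.
have dpos : 0 < d%:R :> Rdefinitions.R by rewrite ltr0n.
pose s := lo / (2 * d%:R).
have spos : 0 < s by rewrite /s divr_gt0 // mulr_gt0.
pose N := (Num.truncn (hi / s)).+1.
have hN : hi <= N%:R * s.
  have := truncnS_gt (hi / s); rewrite -/N => h.
  rewrite -ler_pdivrMr //; exact: ltW.
pose fl (x : pt d) i := Num.floor (x ord0 i / s).
pose cc (x : pt d) i : 'I_N.+1 := inord `|(fl x i %% N.+1%:Z)%Z|%N.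
pose phi x := enum_rank [ffun i => cc x i].
exists _, phi => x y hxy.
have hc : forall i, (fl x i %% N.+1)%Z = (fl y i %% N.+1)%Z.
  move=> i; have := enum_rank_inj hxy => /ffunP /(_ i); rewrite !ffunE.
  move/(congr1 val); rewrite /= !inordK; first last.
  - by rewrite -ltz_nat gez0_abs ?modz_ge0 ?ltz_pmod.
  - by rewrite -ltz_nat gez0_abs ?modz_ge0 ?ltz_pmod.
  move/(congr1 (fun n : nat => n%:Z)); rewrite !gez0_abs ?modz_ge0 //.
have xs i : x ord0 i = (x ord0 i / s) * s by rewrite divfK // gt_eqF.
have ys i : y ord0 i = (y ord0 i / s) * s by rewrite divfK // gt_eqF.
have D0 : 0 <= \sum_i (x ord0 i - y ord0 i) ^+ 2 by apply: sumr_ge0 => i _; exact: sqr_ge0.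
rewrite /edist.
case: (pselect (forall i, fl x i = fl y i)) => [heq|hne].
- left.
  have hterm i : (x ord0 i - y ord0 i) ^+ 2 <= s ^+ 2.
    rewrite (xs i) (ys i); apply: (@test _ _ (fl x i)%:~R) => //.
      by have := floor_itv (x ord0 i / s); rewrite intrD.
    by rewrite heq; have := floor_itv (y ord0 i / s); rewrite intrD.
  have hsum : \sum_i (x ord0 i - y ord0 i) ^+ 2 <= \sum_(i < d) s ^+ 2 by apply: ler_sum => i _.
  rewrite sumr_const card_ord in hsum.
  have hlo2 : 0 < lo ^+ 2 by rewrite exprn_gt0.
  rewrite -(gtr0_norm hlo) -sqrtr_sqr ltr_sqrt //.
  apply: (le_lt_trans hsum).
  have -> : s ^+ 2 *+ d = lo ^+ 2 / (4 * d%:R).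
    rewrite -mulr_natr /s; field; rewrite gt_eqF //.
  have d1 : 1 <= d%:R :> Rdefinitions.R by rewrite ler1n.
  rewrite ltr_pdivrMr ?mulr_gt0 //; nra.
- right.
  have [i hi0] : exists i, fl x i != fl y i.
    apply: contrapT => hn; apply: hne => i; apply/eqP; apply: contrapT => h; apply: hn; exists i; exact/negP.
  have hfar := int_mod_far (hc i) hi0.
  have [ax1 ax2] := andP (floor_itv (x ord0 i / s)).
  have [ay1 ay2] := andP (floor_itv (y ord0 i / s)).
  have hN' : ((N.+1%:R : Rdefinitions.R) <= (fl x i)%:~R - (fl y i)%:~R) \/ ((N.+1%:R : Rdefinitions.R) <= (fl y i)%:~R - (fl x i)%:~R).
    case: hfar => h; [left|right].
      have h' : ((N.+1%:Z)%:~R : Rdefinitions.R) <= (fl x i - fl y i)%:~R by rewrite ler_int.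
      rewrite intrB -pmulrn in h'; exact: h'.
    have h' : ((N.+1%:Z)%:~R : Rdefinitions.R) <= (fl y i - fl x i)%:~R by rewrite ler_int.
    rewrite intrB -pmulrn in h'; exact: h'.
  rewrite intrD in ax2 ay2.
  have hterm : hi ^+ 2 < (x ord0 i - y ord0 i) ^+ 2.
    rewrite (xs i) (ys i).
    move: ax1 ax2 ay1 ay2 hN' hN; rewrite /fl.
    set u := x ord0 i / s; set v := y ord0 i / s.
    set a := (Num.floor u)%:~R; set b := (Num.floor v)%:~R.
    rewrite -addn1 natrD => ? ? ? ? hN' hN.
    have -> : (u * s - v * s) ^+ 2 = ((u - v) * s) ^+ 2 by ring.
    case: hN' => h.
    + have : N%:R * s < (u - v) * s by rewrite ltr_pM2r //; lra.
      nra.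
    + have : N%:R * s < (v - u) * s by rewrite ltr_pM2r //; lra.
      nra.
  have hhi2 : 0 <= hi ^+ 2 by exact: sqr_ge0.
  rewrite -(ger0_norm hhi) -sqrtr_sqr ltr_sqrt; last first.
    apply: (le_lt_trans hhi2); apply: lt_le_trans; first exact: hterm.
    apply: sq_le_sum => j; exact: sqr_ge0.
  apply: lt_le_trans; first exact: hterm.
  apply: sq_le_sum => j; exact: sqr_ge0.
Qed.

Definition addpt d (T : pset d) (q : pt d) : pset d := fun x => T x \/ x = q.
Definition img d (f : pt d -> pt d) (Y : pset d) : pset d := fun y => exists x, Y x /\ f x = y.

Lemma In_of_mem (T : eqType) (x : T) s : x \in s -> List.In x s.
Proof. elim: s => // a s IH; rewrite inE => /orP[/eqP ->|/IH]; [left|right] => //. Qed.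

Lemma avoid d (hd : (0 < d)%N) (B : seq (pt d)) : exists t, t \notin B.
Proof.
pose i0 : 'I_d := Ordinal hd.
pose f (n : nat) : pt d := const_mx (n%:R).
have finj : injective f.
  move=> n1 n2 /matrixP /(_ ord0 i0); rewrite !mxE => /eqP; rewrite eqr_nat => /eqP //.
apply: contrapT => hn.
have sub : {subset map f (iota 0 (size B).+1) <= B}.
  move=> t _; apply: contrapT => tB; apply: hn; exists t; exact/negP.
have hu : uniq (map f (iota 0 (size B).+1)) by rewrite (map_inj_uniq finj) iota_uniq.
have := uniq_leq_size hu sub.
by rewrite size_map size_iota ltnn.
Qed.

Lemma exists_tau d (T : pset d) (l : seq (pt d)) : exists t : pt d,
  (0 < d)%N -> (exists s : seq (pt d), forall x, T x <-> x \in s) -> forall q, q \in l -> ~ T (q + t).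
Proof.
case: (pselect ((0 < d)%N /\ exists s : seq (pt d), forall x, T x <-> x \in s)) => [[hd [s hs]]|hn]; last first.
  by exists 0 => hd hs; exfalso; apply: hn.
have [t ht] := avoid hd [seq a - q | a <- s, q <- l].
exists t => _ _ q ql /hs qs; move: ht; apply/negP; rewrite negbK.
apply/allpairsP; exists (q + t, q) => /=; split => //.
by rewrite (addrC q t) addrK.
Qed.

Definition tau d (T : pset d) (l : seq (pt d)) : pt d := proj1_sig (cid (exists_tau T l)).
Lemma tauP d (T : pset d) l : (0 < d)%N -> (exists s : seq (pt d), forall x, T x <-> x \in s) ->
  forall q, q \in l -> ~ T (q + tau T l).
Proof. exact: (proj2_sig (cid (exists_tau T l))). Qed.

Fixpoint pow (T : Type) (l : seq T) : seq (seq T) :=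
  match l with [::] => [:: [::]] | x :: l' => pow l' ++ map (cons x) (pow l') end.

Lemma filter_pow (T : eqType) (p : pred T) (l : seq T) : filter p l \in pow l.
Proof.
elim: l => [|x l IH] /=; first by rewrite inE.
rewrite mem_cat; case: (p x); apply/orP; [right|left] => //.
by rewrite mem_map //; move=> a b [].
Qed.

Definition attach d (M : seq (pset d)) (Qj : seq (pt d)) (s : seq (pt d)) : seq (pt d) :=
  match pselect (exists Tf : pset d * (pt d -> pt d), List.In (fst Tf) M /\ isometry (snd Tf) /\
           forall y, y \in s <-> exists x, (fst Tf) x /\ (snd Tf) x = y) with
  | left H => let Tf := proj1_sig (cid H) in [seq (snd Tf) (q + tau (fst Tf) Qj) | q <- Qj]
  | right _ => [::] end.

Lemma attach_spec d (M : seq (pset d)) Qj s :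
  (exists Tf : pset d * (pt d -> pt d), List.In (fst Tf) M /\ isometry (snd Tf) /\
           forall y, y \in s <-> exists x, (fst Tf) x /\ (snd Tf) x = y) ->
  exists T f, List.In T M /\ isometry f /\ (forall y, y \in s <-> exists x, T x /\ f x = y) /\
    attach M Qj s = [seq f (q + tau T Qj) | q <- Qj].
Proof.
move=> H; rewrite /attach; case: pselect => [H'|//].
case: (cid H') => [[T f] [h1 [h2 h3]]] /=; by exists T, f.
Qed.

Definition MonoIn d (E : hypergraph (pt d)) (Q : seq (pt d)) (C : Type) (phi : pt d -> C) :=
  exists e, E e /\ inside e Q /\ mono phi e.
Definition Pprop d (E : hypergraph (pt d)) (j : nat) (Q : seq (pt d)) :=
  forall (C : eqType) (phi : pt d -> C) (L : seq C), (size L < j)%N ->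
    (forall x, x \in Q -> phi x \in L) -> MonoIn E Q phi.

Definition Qm d (M : seq (pset d)) (j : nat) : seq (pt d) :=
  match pselect (exists Q, Pprop (HM M) j.+1 Q) with
  | left H => proj1_sig (cid H) | right _ => [::] end.

Lemma Qm_spec d (M : seq (pset d)) j : (exists Q, Pprop (HM M) j.+1 Q) -> Pprop (HM M) j.+1 (Qm M j).
Proof. move=> H; rewrite /Qm; case: pselect => [H'|//]; exact: (proj2_sig (cid H')). Qed.

Fixpoint Qs d (M : seq (pset d)) (j : nat) : seq (pt d) :=
  match j with 0 => [::]
  | j'.+1 => Qm M j' ++ flatten [seq attach M (Qs M j') s | s <- pow (Qm M j')] end.

Definition W d (M : seq (pset d)) (k : nat) (T : pset d) : seq (pt d) :=
  flatten [seq [seq q + tau T (Qs M j) | q <- Qs M j] | j <- iota 0 k.+1].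

Definition Sset d (M : seq (pset d)) (k : nat) : seq (pset d) :=
  List.flat_map (fun T => List.map (addpt T) (W M k T)) M.

Lemma iso_comp d (f g : pt d -> pt d) : isometry f -> isometry g -> isometry (fun x => f (g x)).
Proof. by move=> hf hg x y; rewrite hf hg. Qed.

Lemma iso_trans d (t : pt d) : isometry (fun x => x + t).
Proof.
move=> x y; rewrite /edist; congr (Num.sqrt _); apply: eq_bigr => i _.
by rewrite !mxE (addrC (y ord0 i)) addrKA.
Qed.

Lemma HM_img d (S : seq (pset d)) Y g : HM S Y -> isometry g -> HM S (img g Y).
Proof.
move=> [T [TS [f [hf hY]]]] hg; exists T; split => //.
exists (fun x => g (f x)); split; first exact: iso_comp.
move=> y; split.
  by move=> [x [/hY [z [Tz <-]] <-]]; exists z.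
by move=> [z [Tz <-]]; exists (f z); split => //; apply/hY; exists z.
Qed.

Lemma HM_S_mem d (M : seq (pset d)) k j T q f :
  List.In T M -> (j <= k)%N -> q \in Qs M j -> isometry f ->
  HM (Sset M k) (fun y => (exists x, T x /\ f x = y) \/ y = f (q + tau T (Qs M j))).
Proof.
move=> TM jk qQ hf; exists (addpt T (q + tau T (Qs M j))); split.
  apply/List.in_flat_map; exists T; split => //; apply: List.in_map; apply: In_of_mem.
  apply/flatten_mapP; exists j; first by rewrite mem_iota add0n ltnS.
  exact: map_f.
exists f; split => // y; split.
  move=> [[x [Tx <-]]|->]; first by exists x; split => //; left.
  by exists (q + tau T (Qs M j)); split => //; right.
by move=> [x [[Tx|->] <-]]; [left; exists x|right].
Qed.

Lemma attach_key d (M : seq (pset d)) k j T f (C : eqType) (phi : pt d -> C) L c :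
  (j <= k)%N -> Pprop (HM (Sset M k)) j (Qs M j) -> List.In T M -> isometry f ->
  (forall x, T x -> phi (f x) = c) -> c \in L -> (size L <= j)%N ->
  (forall q, q \in Qs M j -> phi (f (q + tau T (Qs M j))) \in L) ->
  exists Y, HM (Sset M k) Y /\
    (forall y, Y y -> (exists x, T x /\ f x = y) \/ (exists q, q \in Qs M j /\ y = f (q + tau T (Qs M j)))) /\
    mono phi Y.
Proof.
move=> jk IH TM hf hT cL sL hcol.
set t := tau T (Qs M j) in hcol *.
case: (pselect (exists q, q \in Qs M j /\ phi (f (q + t)) = c)) => [[q [qQ hq]]|hn].
  exists (fun y => (exists x, T x /\ f x = y) \/ y = f (q + t)); split; first exact: HM_S_mem.
  split.
    by move=> y [[x [Tx <-]]|->]; [left; exists x | right; exists q].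
  have col : forall y, (exists x, T x /\ f x = y) \/ y = f (q + t) -> phi y = c.
    by move=> y [[x [Tx <-]]|->]; [exact: hT|].
  by move=> y1 y2 h1 h2; rewrite !col.
pose L' := filter (predC1 c) L.
have sL' : (size L' < j)%N.
  rewrite size_filter.
  have h := count_predC (pred1 c) L.
  have hc : (0 < count (pred1 c) L)%N by rewrite -has_count has_pred1.
  have e : count (predC1 c) L = count (predC (pred1 c)) L by apply: eq_count.
  lia.
have hcol' : forall q, q \in Qs M j -> phi (f (q + t)) \in L'.
  move=> q qQ; rewrite mem_filter hcol // andbT /=; apply/eqP => h; apply: hn; by exists q.
have [Y0 [HY0 [iY0 mY0]]] := IH C (fun q => phi (f (q + t))) L' sL' hcol'.
exists (img (fun x => f (x + t)) Y0); split.
  apply: HM_img => //; apply: iso_comp => //; exact: iso_trans.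
split.
  by move=> y [x [Y0x <-]]; right; exists x; split => //; apply: iY0.
move=> y1 y2 [x1 [h1 <-]] [x2 [h2 <-]]; exact: mY0.
Qed.

Lemma step d m (M : seq (pset d)) k j : (2 <= m)%N -> (forall T, List.In T M -> is_gon m T) -> (j < k)%N ->
  (exists Q, Pprop (HM M) j.+1 Q) -> Pprop (HM (Sset M k)) j (Qs M j) ->
  Pprop (HM (Sset M k)) j.+1 (Qs M j.+1).
Proof.
move=> hm hM jk hex IH C phi L sL hcol.
have R := Qm_spec hex.
have subm : forall x, x \in Qm M j -> x \in Qs M j.+1 by move=> x xQ; rewrite /= mem_cat xQ.
have [e [[T [TM [f [hf he]]]] [ie me]]] := R C phi L sL (fun x xQ => hcol x (subm x xQ)).
have [sT [usT [szT hsT]]] := hM T TM.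
have ee : forall y, e y <-> y \in map f sT.
  move=> y; rewrite he; split.
    by move=> [x [/hsT Tx <-]]; exact: map_f.
  by move=> /mapP [x /hsT Tx ->]; exists x.
pose s := filter (fun y => y \in map f sT) (Qm M j).
have hs : forall y, y \in s <-> e y.
  move=> y; rewrite mem_filter; split.
    by move=> /andP [h _]; apply/ee.
  by move=> ey; rewrite (ie _ ey) andbT; apply/ee.
have [T' [f' [TM' [hf' [hs' hatt]]]]] : exists T f, List.In T M /\ isometry f /\ (forall y, y \in s <-> exists x, T x /\ f x = y) /\
    attach M (Qs M j) s = [seq f (q + tau T (Qs M j)) | q <- Qs M j].
  apply: attach_spec; exists (T, f) => /=; split => //; split => // y.
  rewrite hs; exact: he.
have sub_att : forall y, y \in attach M (Qs M j) s -> y \in Qs M j.+1.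
  move=> y ya; rewrite /= mem_cat; apply/orP; right; apply/flatten_mapP; exists s => //.
  exact: filter_pow.
have [a ain] : exists a, a \in sT.
  by move: szT hm; case: sT {usT hsT ee s hs hs' hatt sub_att} => [|a ?] /=; [move=> <-|exists a; rewrite inE eqxx].
have ea : e (f a) by apply/ee; exact: map_f.
pose c := phi (f a).
have cL : c \in L := hcol _ (subm _ (ie _ ea)).
have [||Y [HY [hin mY]]] := @attach_key d M k j T' f' C phi L c (ltnW jk) IH TM' hf' _ cL sL.
- move=> x Tx; apply: me; last exact: ea.
  by apply/hs; apply/hs'; exists x.
- move=> q qQ; apply: hcol; apply: sub_att; rewrite hatt; exact: map_f.
exists Y; split => //; split => // y Yy.
case: (hin y Yy) => [[x [Tx <-]]|[q [qQ ->]]].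
  by apply: subm; apply: ie; apply/hs; apply/hs'; exists x.
by apply: sub_att; rewrite hatt; exact: map_f.
Qed.

Lemma mem_of_In (T : eqType) (x : T) s : List.In x s -> x \in s.
Proof. elim: s => //= a s IH [->|/IH h]; rewrite inE ?eqxx ?h ?orbT //. Qed.

Lemma HM_fin d m (M : seq (pset d)) : (forall T, List.In T M -> is_gon m T) ->
  forall e, HM M e -> exists s : seq (pt d), forall x, e x <-> x \in s.
Proof.
move=> hM e [T [TM [f [hf he]]]]; have [sT [_ [_ hsT]]] := hM T TM.
exists (map f sT) => y; rewrite he; split.
  by move=> [x [/hsT Tx <-]]; exact: map_f.
by move=> /mapP [x /hsT Tx ->]; exists x.
Qed.

Lemma compact_use d m (M : seq (pset d)) j : (forall T, List.In T M -> is_gon m T) ->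
  ~ colorable (HM M) j -> exists Q, Pprop (HM M) j.+1 Q.
Proof.
move=> hM nc; apply: contrapT => nQ; apply: nc; apply: compactness; first exact: HM_fin hM.
move=> Q; apply: contrapT => nphi; apply: nQ; exists (0 :: Q) => C phi L sL hcol.
case: j nphi sL => [|j] nphi sL.
  by case: L sL hcol => // _ /(_ 0); rewrite inE eqxx => /(_ isT).
pose psi x : 'I_j.+1 := inord (index (phi x) L).
have [e [Ee [ie me]]] : exists e, HM M e /\ inside e Q /\ mono psi e.
  apply: contrapT => hn; apply: nphi; exists psi => e Ee ie me; apply: hn; exists e.
  by split => //; split.
exists e; split => //; split; first by move=> x ex; rewrite inE (ie x ex) orbT.
move=> x y ex ey; have := me x y ex ey; rewrite /psi => /(congr1 val).
have hx : phi x \in L by apply: hcol; rewrite inE (ie x ex) orbT.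
have hy : phi y \in L by apply: hcol; rewrite inE (ie y ey) orbT.
have ix : (index (phi x) L < j.+1)%N.
  have : (index (phi x) L < size L)%N by rewrite index_mem.
  move: sL; lia.
have iy : (index (phi y) L < j.+1)%N.
  have : (index (phi y) L < size L)%N by rewrite index_mem.
  move: sL; lia.
rewrite /= !inordK //.
by move=> h; rewrite -(nth_index (phi x) hx) h nth_index.
Qed.

Lemma edist_pos d (a b : pt d) : a != b -> 0 < edist a b.
Proof.
move=> hab; rewrite /edist sqrtr_gt0 lt_def sumr_ge0 ?andbT; last by move=> i _; exact: sqr_ge0.
apply/eqP => h0; move/eqP: hab; apply; apply/rowP => i.
have := psumr_eq0P (fun i _ => sqr_ge0 (a ord0 i - b ord0 i)) h0 (i:=i) isT.
by move/eqP; rewrite sqrf_eq0 subr_eq0 => /eqP.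
Qed.

Lemma color_fin d m (M : seq (pset d)) : (0 < d)%N -> (2 <= m)%N ->
  (forall T, List.In T M -> is_gon m T) -> exists k, colorable (HM M) k.
Proof.
move=> hd hm hM.
have [lo [hi [hlo [hhi hT]]]] : exists lo hi : Rdefinitions.R, 0 < lo /\ 0 <= hi /\
    forall T, List.In T M -> exists a b, T a /\ T b /\ lo <= edist a b /\ edist a b <= hi.
  elim: M hM => [|T M IH] hM; first by exists 1, 0; split => //; split.
  have [lo [hi [hlo [hhi hT]]]] := IH (fun T' h => hM T' (or_intror h)).
  have [sT [usT [szT hsT]]] := hM T (or_introl erefl).
  case: sT usT szT hsT => [|a [|b sT]] //=; try by move=> _ hs; rewrite -hs in hm.
  rewrite inE negb_or => /andP [/andP [hab _] _] _ hsT.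
  have rpos := edist_pos hab.
  exists (Num.min lo (edist a b)), (Num.max hi (edist a b)); split; first by rewrite lt_min hlo rpos.
  split; first by rewrite le_max hhi.
  move=> T' [<-|T'M].
    exists a, b; split; first by apply/hsT; rewrite inE eqxx.
    split; first by apply/hsT; rewrite !inE eqxx orbT.
    by split; rewrite ?ge_min ?le_max lexx ?orbT.
  have [a' [b' [ha [hb [h1 h2]]]]] := hT T' T'M.
  exists a', b'; split => //; split => //.
  by split; rewrite ?ge_min ?le_max ?h1 ?h2.
have [K [phi hphi]] := grid hd hlo hhi.
exists K, phi => e [T [TM [f [hf he]]]] me.
have [a [b [Ta [Tb [h1 h2]]]]] := hT T TM.
have := hphi (f a) (f b) (me _ _ (proj2 (he _) (ex_intro _ a (conj Ta erefl))) (proj2 (he _) (ex_intro _ b (conj Tb erefl)))).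
rewrite hf => -[h|h]; lra.
Qed.

Lemma least_ex (P : nat -> Prop) n : P n -> exists k, P k /\ forall k', (k' < k)%N -> ~ P k'.
Proof.
elim: n {-2}n (leqnn n) => [|n IH] k hk Pk.
  exists k; split => // k' hk'; by move: (leq_trans hk' hk).
case: (pselect (exists k', (k' < k)%N /\ P k')) => [[k' [hk' Pk']]|hn].
  apply: (IH k') => //; by rewrite -ltnS (leq_trans hk' hk).
by exists k; split => // k' hk' Pk'; apply: hn; exists k'.
Qed.

Local Close Scope ring_scope.

Theorem theorem3p1 (d m : nat) (M : seq (pset d)) :
  (1 <= d)%N -> (2 <= m)%N ->
  M <> [::] -> (forall T, List.In T M -> is_gon m T) ->
  exists S : seq (pset d),
    (forall T, List.In T S -> is_gon m.+1 T) /\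
    equivalent_hg (HM M) (HM S).
Proof.
move=> hd hm _ hM.
have [k0 hk0] := color_fin hd hm hM.
have [k [ck mink]] := least_ex hk0.
pose S := Sset M k.
have Pk : forall j, (j <= k)%N -> Pprop (HM S) j (Qs M j).
  elim=> [_|j IH jk]; first by move=> C phi L; rewrite ltn0.
  apply: (step hm hM jk _ (IH (ltnW jk))).
  exact: (compact_use hM (mink j jk)).
have proper_sub : forall (C : Type) (phi : pt d -> C), proper_coloring (HM M) phi -> proper_coloring (HM S) phi.
  move=> C phi pM Y [T1 [T1S [g [hg hY]]]] mY.
  have [T [TM /List.in_map_iff [q [eq _]]]] := proj1 (List.in_flat_map _ _ _) T1S.
  apply: (pM (fun y => exists x, T x /\ g x = y)).
    by exists T; split => //; exists g; split.
  move=> x y [x0 [Tx0 <-]] [y0 [Ty0 <-]]; apply: mY; apply/hY.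
    by exists x0; split => //; rewrite -eq; left.
  by exists y0; split => //; rewrite -eq; left.
have Tne : forall T, List.In T M -> exists a, T a.
  move=> T TM; have [sT [_ [szT hsT]]] := hM T TM.
  move: szT hm hsT; case: sT => [|a ?] /=; first by move=> <-.
  by move=> _ _ hsT; exists a; apply/hsT; rewrite inE eqxx.
exists S; split.
  move=> Y /List.in_flat_map [T [TM /List.in_map_iff [q [<- qW]]]].
  have [sT [usT [szT hsT]]] := hM T TM.
  have nTq : ~ T q.
    move: qW => /mem_of_In /flatten_mapP [j _ /mapP [q0 q0Q ->]].
    apply: tauP => //; exists sT; exact: hsT.
  exists (q :: sT); split.
    rewrite /= usT andbT; apply/negP => /hsT; exact: nTq.
  split; first by rewrite /= szT.
  move=> x; rewrite inE; split.
    by move=> [/hsT ->|->]; rewrite ?eqxx ?orbT.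
  by move=> /orP [/eqP ->|/hsT h]; [right|left].
exists k; split; first by split.
have lowS : forall k', (k' < k)%N -> ~ colorable (HM S) k'.
  move=> k' hk' [phi pS].
  have sz : (size (enum 'I_k') < k)%N by rewrite size_enum_ord.
  have [e [Ee [_ me]]] := Pk k (leqnn k) _ phi (enum 'I_k') sz (fun x _ => mem_enum _ _).
  exact: (pS e Ee me).
split.
  split => //; have [phi pM] := ck; exists phi; exact: proper_sub.
move=> C hC phi; split; first exact: proper_sub.
move=> pS e [T [TM [f [hf he]]]] me.
have [a Ta] := Tne T TM.
have ea : e (f a) by apply/he; exists a.
have sz2 : (size (enum C) <= k)%N by rewrite -cardE hC.
have [Y [HY [_ mY]]] := @attach_key d M k k T f C phi (enum C) (phi (f a)) (leqnn k) (Pk k (leqnn k)) TM hf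
  (fun x Tx => me _ _ (proj2 (he _) (ex_intro _ x (conj Tx erefl))) ea) (mem_enum _ _)
  sz2 (fun q _ => mem_enum _ _).
exact: (pS Y HY mY).
Qed.
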